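(* Let $K\in\mathbb{N}$, $L>0$, and let $p$ be a probability density function on $\mathbb{R}^K$ that is $L$-Lipschitz continuous with respect to the $\ell_1$-norm. Then for all $\mathbf{x}\in\mathbb{R}^K$, \[ p(\mathbf{x})\le\Big(\frac{L^K(K+1)!}{2^K}\Big)^{\frac1{K+1}}. \] *)

(* Defs.v *)
From mathcomp Require Import all_boot all_order all_algebra.
From mathcomp Require Import all_classical all_reals all_analysis.
Set Implicit Arguments. Unset Strict Implicit. Unset Printing Implicit Defensive.
Import Order.TTheory GRing.Theory Num.Theory.
Local Open Scope ring_scope.
Local Open Scope ereal_scope.

(* Integral over R^K (vectors 'rV[R]_K) with respect to K-dimensional Lebesgue
   measure, written as the iterated one-dimensional Lebesgue integral
   (by Tonelli this is the K-dim Lebesgue integral for nonnegative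
   measurable, e.g. continuous, integrands).  For K = 0, R^0 is a point of
   mass 1. *)
Fixpoint iint {R : realType} (K : nat) : ('rV[R]_K -> \bar R) -> \bar R :=
  match K return ('rV[R]_K -> \bar R) -> \bar R with
  | 0 => fun f => f 0%R
  | K'.+1 => fun f =>
      \int[@lebesgue_measure R]_(t in setT)
        iint (fun v : 'rV[R]_K' => f (row_mx (t%:M : 'M[R]_1) v))
  end.

Definition norm1 {R : realType} {K : nat} (x : 'rV[R]_K) : R :=
  (\sum_(i < K) `|x 0 i|)%R.

Definition is_pdf {R : realType} (K : nat) (p : 'rV[R]_K -> R) : Prop :=
  (forall x, 0 <= p x)%R /\ iint (fun x => (p x)%:E) = 1.

Definition lipschitz_l1 {R : realType} (K : nat) (L : R) (p : 'rV[R]_K -> R) : Prop :=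
  forall x y, (`|p x - p y| <= L * norm1 (x - y))%R.

(* Main.v *)
Require Import Defs.

From mathcomp Require Import all_boot all_order all_algebra.
From mathcomp Require Import all_classical all_reals all_analysis.
From mathcomp Require Import measurable_realfun ring lra.
Import Order.TTheory GRing.Theory Num.Theory.
Local Open Scope ring_scope.
Section S.
Context {R : realType}.
Local Notation mu := (@lebesgue_measure R).

Lemma ftc_poly (Q : {poly R}) a b : a < b ->
  (\int[mu]_(t in `[a, b]) (Q^`().[t])%:E = (Q.[b] - Q.[a])%:E)%E.
Proof.
move=> ab; rewrite EFinB.
have dQ : derivable_oo_LRcontinuous (horner Q) a b.
  split.
  + by move=> t _; exact: derivable_horner.
  + by apply: cvg_at_right_filter; exact: continuous_horner.
  + by apply: cvg_at_left_filter; exact: continuous_horner.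
have dQ' : derivable_oo_LRcontinuous (horner Q^`()) a b.
  split.
  + by move=> t _; exact: derivable_horner.
  + by apply: cvg_at_right_filter; exact: continuous_horner.
  + by apply: cvg_at_left_filter; exact: continuous_horner.
apply: continuous_FTC2 => //.
- exact: derivable_oo_LRcontinuous_within.
- by move=> t _; rewrite -derivE.
Qed.

Lemma meas_tent (A c x0 L : R) m :
  measurable_fun [set: R] (EFin \o (fun t : R => (A * (Num.max (c - L * `|t - x0|) 0) ^+ m))).
Proof.
apply/measurable_EFinP.
apply: measurable_funM => //; apply: measurable_funX.
apply: measurable_maxr => //; apply: measurable_funB => //.
apply: measurable_funM => //.
apply: measurableT_comp => //; exact: measurable_funB.
Qed.
Lemma tent1 (A c x0 L : R) m : 0 < L -> 0 <= A ->
 ((A * 2 * (Num.max c 0) ^+ m.+1 / (L * m.+1%:R))%:E <=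
   \int[mu]_(t in setT) (A * (Num.max (c - L * `|t - x0|) 0) ^+ m)%:E)%E.
Proof.
move=> L0 A0.
have g0 : forall t, 0 <= A * (Num.max (c - L * `|t - x0|) 0) ^+ m.
  by move=> t; rewrite mulr_ge0 // exprn_ge0 // le_max lexx orbT.
have [c0|c0] := leP c 0.
  rewrite expr0n /= mulr0 mul0r.
  by apply: integral_ge0 => t _; rewrite lee_fin.

set d := c / L.
have d0 : 0 < d by rewrite divr_gt0.
have Ld : L * d = c by rewrite /d mulrC divfK // gt_eqF.
pose Qr : {poly R} := - (A / (L * m.+1%:R)) *: (c%:P - L *: ('X - x0%:P)) ^+ m.+1.
have eR : (\int[mu]_(t in `[x0, (x0 + d)%R]) (A * (Num.max (c - L * `|t - x0|) 0) ^+ m)%:E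
   = (A * c ^+ m.+1 / (L * m.+1%:R))%:E)%E.
  rewrite (@eq_integral _ _ _ mu _ (fun t => (Qr^`()).[t]%:E)); last first.
    move=> t; rewrite inE /= in_itv /= => /andP[h1 h2].
    rewrite /Qr derivZ deriv_exp derivB derivC derivZ derivB derivX derivC.
    rewrite !hornerE hornerMn hornerM !hornerE /=.
    rewrite ger0_norm ?subr_ge0 // max_l; last first.
      rewrite subr_ge0 -Ld ler_pM2l // lerBlDl //.
    congr EFin; rewrite subr0 mulr1; field.
    have hm : (0:R) <= m%:R := ler0n _ _.
    by apply/andP; split; apply/eqP; lra.
  rewrite ftc_poly; last by rewrite ltrDl.
  rewrite /Qr !hornerE (_ : x0 + d - x0 = d); last by ring.
  rewrite Ld !subrr mulr0 subr0 expr0n /=.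
  congr EFin; field.
  have hm : (0:R) <= m%:R := ler0n _ _.
  by apply/andP; split; apply/eqP; lra.
pose Ql : {poly R} := (A / (L * m.+1%:R)) *: (c%:P - L *: (x0%:P - 'X)) ^+ m.+1.
have eL : (\int[mu]_(t in `[(x0 - d)%R, x0]) (A * (Num.max (c - L * `|t - x0|) 0) ^+ m)%:E
   = (A * c ^+ m.+1 / (L * m.+1%:R))%:E)%E.
  rewrite (@eq_integral _ _ _ mu _ (fun t => (Ql^`()).[t]%:E)); last first.
    move=> t; rewrite inE /= in_itv /= => /andP[h1 h2].
    rewrite /Ql derivZ deriv_exp derivB derivC derivZ derivB derivX derivC.
    rewrite !hornerE hornerMn hornerM !hornerE /=.
    rewrite ler0_norm ?subr_le0 // opprB max_l; last first.
      by rewrite subr_ge0 -Ld ler_pM2l // lerBlDr addrC -lerBlDr.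
    congr EFin; field.
    have hm : (0:R) <= m%:R := ler0n _ _.
    by apply/andP; split; apply/eqP; lra.
  rewrite ftc_poly; last by rewrite ltrBlDr ltrDl.
  rewrite /Ql !hornerE (_ : x0 - (x0 - d) = d); last by ring.
  rewrite Ld !subrr mulr0 subr0 expr0n /=.
  congr EFin; field.
  have hm : (0:R) <= m%:R := ler0n _ _.
  by apply/andP; split; apply/eqP; lra.
have mg := meas_tent A c x0 L m.
have -> : A * 2 * c ^+ m.+1 / (L * m.+1%:R) =
   A * c ^+ m.+1 / (L * m.+1%:R) + A * c ^+ m.+1 / (L * m.+1%:R) by ring.
rewrite EFinD -[X in (X + _)%E]eL -eR.
rewrite -integral_itv_bndo_bndc; last exact: measurable_funS mg.
rewrite -ge0_integral_setU //=.
- apply: ge0_subset_integral => //=.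
  + exact: measurableU.
  + by move=> t _; rewrite lee_fin.
- exact: measurable_funS mg.
- by move=> t _; rewrite lee_fin.
- apply/disj_setPS => t [] /=; rewrite !in_itv /= => /andP[_ h1] /andP[h2 _].
  by move: (lt_le_trans h1 h2); rewrite ltxx.
Qed.
Local Open Scope ereal_scope.
Lemma le_int_ge0 (f g : R -> \bar R) : (forall x, 0 <= f x) -> (forall x, f x <= g x) ->
  \int[mu]_(x in setT) f x <= \int[mu]_(x in setT) g x.
Proof.
move=> f0 fg.
have g0 : forall x, 0 <= g x by move=> x; apply: le_trans (fg x).
rewrite !ge0_integralTE //.
apply: le_ereal_sup => _ [h hf <-]; exists h => //= x; exact: le_trans (fg x).
Qed.

Lemma iint_ge0 K (f : 'rV[R]_K -> \bar R) : (forall v, 0 <= f v) -> 0 <= iint f.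
Proof.
elim: K f => [|K IH] f f0 /=; first exact: f0.
by apply: integral_ge0 => t _; apply: IH.
Qed.

Lemma iint_le K (f g : 'rV[R]_K -> \bar R) : (forall v, 0 <= f v) ->
  (forall v, f v <= g v) -> iint f <= iint g.
Proof.
elim: K f g => [|K IH] f g f0 fg /=; first exact: fg.
apply: le_int_ge0 => t; first by apply: iint_ge0.
by apply: IH.
Qed.
Local Close Scope ereal_scope.

Lemma norm1_row_mx m n (a : 'rV[R]_m) (b : 'rV[R]_n) :
  norm1 (row_mx a b) = norm1 a + norm1 b.
Proof.
rewrite /norm1 big_split_ord /=; congr (_ + _); apply: eq_bigr => i _.
  by rewrite row_mxEl.
by rewrite row_mxEr.
Qed.

Lemma norm1N n (a : 'rV[R]_n) : norm1 (- a) = norm1 a.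
Proof. by rewrite /norm1; apply: eq_bigr => i _; rewrite mxE normrN. Qed.

Lemma norm1_split K (t : R) (v : 'rV[R]_K) (x : 'rV[R]_(1 + K)) :
  norm1 (row_mx (t%:M : 'M[R]_1) v - x) = `|t - lsubmx x 0 0| + norm1 (v - rsubmx x).
Proof.
rewrite -{1}(hsubmxK x) opp_row_mx add_row_mx norm1_row_mx; congr (_ + _).
by rewrite /norm1 big_ord1 !mxE /= mulr1n.
Qed.

Lemma tentK (L : R) K : 0 < L -> forall (n : nat) (c : R) (x : 'rV[R]_K),
  ((2 ^+ K * n`!%:R / (L ^+ K * (n + K)`!%:R) * (Num.max c 0) ^+ (n + K))%R%:E <=
   iint (fun v => ((Num.max (c - L * norm1 (v - x)) 0) ^+ n)%R%:E))%E.
Proof.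
move=> L0; elim: K => [|K IH] n c x /=.
  rewrite /norm1 big_ord0 mulr0 subr0 addn0 !expr0 !mul1r divff ?mul1r //.
set A := 2 ^+ K * n`!%:R / (L ^+ K * (n + K)`!%:R).
have A0 : 0 <= A by rewrite /A divr_ge0 // mulr_ge0 // ?exprn_ge0 // ltW.
have H : (\int[mu]_(t in setT) (A * Num.max (c - L * `|t - lsubmx (x : 'rV_(1 + K)) 0 0|) 0 ^+ (n + K))%R%:E <=
  \int[mu]_(t in setT) iint (fun v : 'rV_K => (Num.max (c - L * norm1 (row_mx (t%:M : 'M[R]_1) v - x)) 0 ^+ n)%R%:E))%E.
  apply: le_int_ge0 => t.
    by rewrite lee_fin mulr_ge0 // exprn_ge0 // le_max lexx orbT.
  apply: le_trans (IH n (c - L * `|t - lsubmx (x : 'rV_(1 + K)) 0 0|) (rsubmx (x : 'rV_(1 + K)))) _.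
  apply: iint_le => v; first by rewrite lee_fin exprn_ge0 // le_max lexx orbT.
  by rewrite norm1_split mulrDr opprD addrA.
apply: le_trans H.
apply: le_trans (tent1 _ _ _ _ _ L0 A0).
rewrite lee_fin addnS factS natrM exprS exprS /A.
rewrite le_eqVlt; apply/orP; left; apply/eqP; field.
have hn : (0:R) <= n%:R := ler0n _ _.
have hK : (0:R) <= K%:R := ler0n _ _.
apply/and4P; split.
- by apply/eqP; lra.
- by apply/eqP; lra.
- by rewrite pnatr_eq0 -lt0n fact_gt0.
- by rewrite expf_neq0 //; apply/eqP; lra.
Qed.
End S.

Theorem lemma4 (R : realType) (K : nat) (L : R) (p : 'rV[R]_K -> R) :
  0 < L -> is_pdf p -> lipschitz_l1 L p ->
  forall x : 'rV[R]_K,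
    p x <= ((L ^+ K * (K.+1)`!%:R / 2 ^+ K) `^ (K.+1%:R)^-1)%R.
Proof.
move=> L0 [p0 p1] lip x.
have a0 : 0 <= p x := p0 x.
have key := @tentK R L K L0 1 (p x) x.
have le1 : (iint (fun v => (Num.max (p x - L * norm1 (v - x)) 0 ^+ 1)%R%:E) <=
            iint (fun v => (p v)%:E))%E.
  apply: iint_le => v; first by rewrite lee_fin expr1 le_max lexx orbT.
  rewrite lee_fin expr1 ge_max p0 andbT.
  have := lip x v; rewrite -[x - v]opprB norm1N => h.
  have := ler_norm (p x - p v); lra.
rewrite p1 in le1.
have {key le1} := le_trans key le1.
rewrite lee_fin add1n (max_l a0) factS fact0 muln1.
set C := (2 ^+ K * 1`!%:R / (L ^+ K * (K.+1)`!%:R)).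
have fne : (K.+1)`!%:R != 0 :> R by rewrite pnatr_eq0 -lt0n fact_gt0.
have Lne : L ^+ K != 0 by rewrite expf_neq0 //; apply/eqP; lra.
have tne : 2 ^+ K != 0 :> R by rewrite expf_neq0 //; apply/eqP; lra.
have C0 : 0 < C by rewrite /C divr_gt0 // ?mulr_gt0 ?exprn_gt0 ?ltr0n ?fact_gt0.
have eM : L ^+ K * (K.+1)`!%:R / 2 ^+ K = C^-1.
  rewrite /C (_ : 1`! = 1)%N // mulr1; field; by rewrite tne fne Lne.
move=> hC.
have hA : p x ^+ K.+1 <= C^-1.
  by rewrite -(ler_pM2l C0) mulfV ?gt_eqF.
rewrite eM.
have -> : p x = (p x ^+ K.+1) `^ (K.+1%:R)^-1.
  by rewrite -powR_mulrn // -powRrM mulfV ?powRr1 // pnatr_eq0.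
apply: ge0_ler_powR => //.
- by rewrite nnegrE exprn_ge0.
- by rewrite nnegrE invr_ge0 ltW.
Qed.
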